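(* For all $M,H\in\mathbb N$ and $x\in X$ there is a set $\Lambda\subseteq\mathbb N$ such that (1) $\lim_{N\to\infty}\frac1N\#(\{1,\dots,N\}\cap\Lambda)=1$, and (2) for every $F\in\mathcal C_M(X)$ and every $n\in\Lambda$, the value $F(\hat T^{n+h}x)$ is the same for all $0\le h\le H-1$.
   Context: Fix integers $2\le q_1<q_2<\cdots$ such that $q_{k+1}>q_k^4+3q_k$ for every $k\ge1$. For $k\ge1$ put $q^{(0)}_k=q_{2k}$, $q^{(1)}_k=q_{2k+1}$, $q^{(2)}_k=q^{(0)}_k-1$, $q^{(3)}_k=q^{(1)}_k-1$, and $L^{(i)}_k=\lfloor q^{(i)}_{k+1}/(3q^{(i)}_k)\rfloor$. Let $s^{(i)}_k\in\{-1,0,1\}^{\mathbb N}$ (indices $n\ge1$) be given by $s^{(i)}_k(n)=1$ if $n=jq^{(i)}_k$ with $1\le j\le L^{(i)}_k$, $s^{(i)}_k(n)=-1$ if $n=jq^{(i)}_k$ with $L^{(i)}_k<j\le2L^{(i)}_k$, and $s^{(i)}_k(n)=0$ otherwise. For $w\in\{-1,0,1\}^{\mathbb N}$ and $p\in\mathbb N_0$ let $\sigma^{-p}w$ be defined by $(\sigma^{-p}w)(n)=0$ for $1\le n\le p$ and $(\sigma^{-p}w)(n)=w(n-p)$ for $n>p$. For $l\le m$ write $w|_l^m=(w_l,\dots,w_m)$. Let $R^{(i)}_k=\{(\sigma^{-p}s^{(i)}_k)|_{q^{(i)}_k}^{q^{(i)}_{k+1}-1}:p=0,1,\dots,q^{(i)}_k\}$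 and $P^{(i)}=\{y\in\{-1,0,1\}^{\mathbb N}: y(n)=0\text{ for }1\le n<q^{(i)}_1,\ y|_{q^{(i)}_k}^{q^{(i)}_{k+1}-1}\in R^{(i)}_k\text{ for all }k\ge1\}$. Let $Z=\{-1,0,1\}^{\mathbb N}\times\{-1,0,1\}^{\mathbb Z}$, where each factor carries the metric $d(u,v)=3^{-\min\{|m|:u_m\neq v_m\}}$ and $Z$ the maximum of the two. $\sigma$ is the left shift $(\sigma u)_m=u_{m+1}$ (invertible on $\{-1,0,1\}^{\mathbb Z}$). Define $T:Z\to Z$, $T(y,z)=(\sigma y,\sigma^{y_1}z)$, and $X_i=\overline{\bigcup_{n\ge0}T^n(P^{(i)}\times\{-1,0,1\}^{\mathbb Z})}$ for $i\in\{0,1,2,3\}$. Let $X=X_0\times X_1\times X_2\times X_3\times\{0,1,2,3\}$ with $\hat T(p^{(0)},p^{(1)},p^{(2)},p^{(3)},i)=(Tp^{(0)},Tp^{(1)},Tp^{(2)},Tp^{(3)},i)$. For $p=(y,z)\in Z$ and $M\in\mathbb N$, $[p]_M=((y_1,\dots,y_M),(z_{-M},\dots,z_M))$. Writing points of $X$ as $(x^{(0)},x^{(1)},x^{(2)},x^{(3)},i)$, $\mathcal C_M(X)$ denotes the set of functions $F:X\to\mathbb C$ whose value depends only on $([x^{(\ell)}]_M)_{0\le\ell\le3}$ and $i$. *)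

(* Defs.v *)
From Stdlib Require Import Reals ZArith Arith List Lia Bool.
From Coquelicot Require Import Coquelicot.
Local Open Scope nat_scope.

(* ---------- Points of Z = {-1,0,1}^N x {-1,0,1}^Z ----------
   A one-sided sequence y = (y_1, y_2, ...) is encoded as y : nat -> Z,
   with coordinate n stored at index n (n >= 1); index 0 is unused and
   normalised to 0 for points of Z. *)
Definition pt := ((nat -> Z) * (Z -> Z))%type.

Definition trit (a : Z) : Prop := (a = -1 \/ a = 0 \/ a = 1)%Z.

Definition inOneSided (y : nat -> Z) : Prop :=
  y 0 = 0%Z /\ forall n, 1 <= n -> trit (y n).
Definition inTwoSided (z : Z -> Z) : Prop := forall m, trit (z m).
Definition inZsp (p : pt) : Prop := inOneSided (fst p) /\ inTwoSided (snd p).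

Definition shift1 (y : nat -> Z) : nat -> Z :=
  fun n => match n with 0 => 0%Z | _ => y (n + 1) end.

Definition T (p : pt) : pt :=
  (shift1 (fst p), fun m => snd p (m + fst p 1%nat)%Z).

(* [p]_M = [p']_M : agreement of y on 1..M and of z on -M..M;
   equivalently d(p,p') < 3^{-M} *)
Definition window_eq (M : nat) (p p' : pt) : Prop :=
  (forall n, 1 <= n <= M -> fst p n = fst p' n) /\
  (forall m : Z, (- Z.of_nat M <= m <= Z.of_nat M)%Z -> snd p m = snd p' m).

Definition qi (q : nat -> nat) (i k : nat) : nat :=
  match i with
  | 0 => q (2 * k)
  | 1 => q (2 * k + 1)
  | 2 => q (2 * k) - 1
  | _ => q (2 * k + 1) - 1
  end.

Definition Lq (q : nat -> nat) (i k : nat) : nat :=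
  qi q i (k + 1) / (3 * qi q i k).

Definition s (q : nat -> nat) (i k : nat) : nat -> Z :=
  fun n =>
    let a := qi q i k in
    let L := Lq q i k in
    if (1 <=? n) && (n mod a =? 0) then
      let j := n / a in
      if (1 <=? j) && (j <=? L) then 1%Z
      else if (L <? j) && (j <=? 2 * L) then (-1)%Z
      else 0%Z
    else 0%Z.

Definition shiftR (p : nat) (w : nat -> Z) : nat -> Z :=
  fun n => if n <=? p then 0%Z else w (n - p).

Definition inR (q : nat -> nat) (i k : nat) (y : nat -> Z) : Prop :=
  exists p, p <= qi q i k /\
    forall n, qi q i k <= n <= qi q i (k + 1) - 1 ->
      y n = shiftR p (s q i k) n.

Definition inP (q : nat -> nat) (i : nat) (y : nat -> Z) : Prop :=
  inOneSided y /\
  (forall n, 1 <= n < qi q i 1 -> y n = 0%Z) /\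
  (forall k, 1 <= k -> inR q i k y).

Definition inOrbit (q : nat -> nat) (i : nat) (p : pt) : Prop :=
  exists n p0, inP q i (fst p0) /\ inTwoSided (snd p0) /\ p = Nat.iter n T p0.

(* X_i = closure in Z of that union *)
Definition inXi (q : nat -> nat) (i : nat) (p : pt) : Prop :=
  inZsp p /\ forall M, exists p', inOrbit q i p' /\ window_eq M p p'.

Definition pt4 := (pt * pt * pt * pt * nat)%type.

Definition inX (q : nat -> nat) (x : pt4) : Prop :=
  match x with (p0, p1, p2, p3, i) =>
    inXi q 0 p0 /\ inXi q 1 p1 /\ inXi q 2 p2 /\ inXi q 3 p3 /\ i < 4
  end.

Definition hatT (x : pt4) : pt4 :=
  match x with (p0, p1, p2, p3, i) => (T p0, T p1, T p2, T p3, i) end.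

Definition CM (q : nat -> nat) (M : nat) (F : pt4 -> C) : Prop :=
  forall x x' : pt4, inX q x -> inX q x' ->
    match x, x' with (p0, p1, p2, p3, i), (p0', p1', p2', p3', i') =>
      window_eq M p0 p0' -> window_eq M p1 p1' -> window_eq M p2 p2' ->
      window_eq M p3 p3' -> i = i' -> F x = F x'
    end.

Definition count_upto (Lam : nat -> bool) (N : nat) : nat :=
  length (filter Lam (seq 1 N)).

Definition good_q (q : nat -> nat) : Prop :=
  2 <= q 1 /\ (forall k, 1 <= k -> q k < q (k + 1)) /\
  (forall k, 1 <= k -> q (k + 1) > q k ^ 4 + 3 * q k).

(* Main.v *)
Require Import Defs.
From Stdlib Require Import Reals ZArith Arith List Lia Lra Bool.
From Coquelicot Require Import Coquelicot.
Local Open Scope nat_scope.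
Local Open Scope bool_scope.

Lemma q_ge (q : nat -> nat) (hq : good_q q) : forall k, 1 <= k -> k + 1 <= q k.
Proof.
  destruct hq as [h1 [h2 h3]].
  intros k Hk. induction k as [|k IH]; [lia|].
  destruct k; [simpl; lia|].
  specialize (h2 (S k) ltac:(lia)). rewrite Nat.add_1_r in h2. specialize (IH ltac:(lia)). lia.
Qed.

Lemma q_grow q (hq: good_q q) k : 1 <= k -> 11 * q k <= q (S k).
Proof.
  intros Hk. pose proof (q_ge q hq k Hk) as G.
  destruct hq as [_ [_ h3]]. specialize (h3 k Hk). rewrite Nat.add_1_r in h3.
  assert (E : q k ^ 4 = q k * (q k * (q k * q k))) by (simpl; ring).
  rewrite E in h3.
  assert (q k * q k >= 2 * q k) by nia.
  assert (q k * (q k * q k) >= 4 * q k) by nia.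
  assert (q k * (q k * (q k * q k)) >= 8 * q k) by nia.
  nia.
Qed.

Lemma a_grow q (hq : good_q q) i j : 1 <= j -> 6 * qi q i j <= qi q i (j+1).
Proof.
  intros Hj. pose proof (q_ge q hq (2*j) ltac:(lia)).
  pose proof (q_grow q hq (2*j) ltac:(lia)).
  pose proof (q_grow q hq (S (2*j)) ltac:(lia)).
  pose proof (q_grow q hq (S (S (2*j))) ltac:(lia)).
  unfold qi.
  replace (2*(j+1)) with (S (S (2*j))) by lia.
  replace (S (S (2*j)) + 1) with (S (S (S (2*j)))) by lia.
  replace (2*j+1) with (S (2*j)) by lia.
  destruct i as [|[|[|i]]]; lia.
Qed.

Lemma a_ge q (hq : good_q q) i j : 1 <= j -> j <= qi q i j /\ 1 <= qi q i j.
Proof.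
  intros Hj. pose proof (q_ge q hq (2*j) ltac:(lia)).
  pose proof (q_ge q hq (S (2*j)) ltac:(lia)).
  unfold qi. replace (2*j+1) with (S (2*j)) by lia.
  destruct i as [|[|[|i]]]; lia.
Qed.

Section Gen.
Variable a : nat -> nat.
Hypothesis G : forall j, 1 <= j -> 6 * a j <= a (j+1).
Hypothesis P : forall j, 1 <= j -> j <= a j /\ 1 <= a j.

Lemma mono_lt : forall j1 j2, 1 <= j1 -> j1 < j2 -> a j1 < a j2.
Proof.
  intros j1 j2 H1 H2. induction j2 as [|j2 IH]; [lia|].
  assert (a j2 < a (S j2)).
  { replace (S j2) with (j2+1) by lia. specialize (G j2 ltac:(lia)).
    specialize (P j2 ltac:(lia)). lia. }
  destruct (Nat.eq_dec j1 j2). subst; lia. specialize (IH ltac:(lia)). lia.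
Qed.

Lemma mono_le : forall j1 j2, 1 <= j1 -> j1 <= j2 -> a j1 <= a j2.
Proof.
  intros j1 j2 H1 H2. destruct (Nat.eq_dec j1 j2). subst; lia.
  pose proof (mono_lt j1 j2 H1 ltac:(lia)). lia.
Qed.

Lemma level : forall n, a 1 <= n -> exists j, 1 <= j /\ a j <= n < a (j+1).
Proof.
  intros n Hn.
  assert (forall m, n < a (S m) -> exists j, 1<=j /\ a j <= n < a (j+1)) as K.
  { induction m; intros Hm. lia.
    destruct (Nat.lt_ge_cases n (a (S m))). apply IHm; auto.
    exists (S m). replace (S m + 1) with (S (S m)) by lia. split; [lia|]. lia. }
  apply (K n). pose proof (P (S n) ltac:(lia)). lia.
Qed.
End Gen.

Lemma nz_level q i w j : 1 <= qi q i j -> inR q i j w -> exists p, p <= qi q i j /\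
  forall n, qi q i j <= n <= qi q i (j+1) - 1 -> w n <> 0%Z ->
  exists c, n = p + c * qi q i j /\ 1 <= c /\ 3 * (c * qi q i j) <= 2 * qi q i (j+1).
Proof.
  intros Ha [p [Hp Hw]]. exists p. split; [exact Hp|]. intros n Hn Hnz.
  rewrite (Hw n Hn) in Hnz. unfold shiftR in Hnz.
  destruct (n <=? p) eqn:E; [congruence|]. apply Nat.leb_gt in E.
  unfold s in Hnz. cbv zeta in Hnz. unfold Lq in Hnz.
  remember (qi q i j) as A. remember (qi q i (j+1)) as A'.
  remember ((n - p) / A) as c.
  revert Hnz.
  destruct ((1 <=? n - p) && ((n - p) mod A =? 0)) eqn:E2; [|congruence].
  apply andb_prop in E2 as [_ E2]. apply Nat.eqb_eq in E2.
  intros Hnz.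
  assert (Hc : 1 <= c <= 2*(A' / (3*A))).
  { revert Hnz.
    destruct ((1 <=? c) && (c <=? A' / (3 * A))) eqn:E3.
    - apply andb_prop in E3 as [E3 E4]. apply Nat.leb_le in E3. apply Nat.leb_le in E4. lia.
    - destruct ((A' / (3 * A) <? c) && (c <=? 2 * (A' / (3 * A)))) eqn:E4; [|congruence].
      apply andb_prop in E4 as [E4 E5]. apply Nat.ltb_lt in E4. apply Nat.leb_le in E5. lia. }
  pose proof (Nat.div_mod_eq (n-p) A) as Hd. rewrite E2, <- Heqc in Hd.
  pose proof (Nat.Div0.mul_div_le A' (3*A)) as HL.
  remember (A' / (3*A)) as L.
  exists c. split; [nia|]. split; [lia|]. nia.
Qed.

Lemma spacingP q (hq: good_q q) i w k n n' : inP q i w -> 1 <= k -> qi q i k <= n -> n < n' ->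
  w n <> 0%Z -> w n' <> 0%Z -> qi q i k <= n' - n.
Proof.
  intros [_ [_ HR]] Hk Hn Hnn' Hw Hw'.
  pose proof (a_grow q hq i) as G. pose proof (a_ge q hq i) as P.
  assert (H1 : qi q i 1 <= qi q i k) by (apply (mono_le _ G P); lia).
  destruct (level _ P n ltac:(lia)) as [j [Hj Hlj]].
  destruct (level _ P n' ltac:(lia)) as [j' [Hj' Hlj']].
  assert (k <= j).
  { destruct (Nat.le_gt_cases k j); auto. pose proof (mono_le _ G P (j+1) k ltac:(lia) ltac:(lia)). lia. }
  assert (Hkj : qi q i k <= qi q i j) by (apply (mono_le _ G P); lia).
  destruct (lt_eq_lt_dec j j') as [[Hlt|Heq]|Hgt].
  - destruct (nz_level q i w j ltac:(apply P; lia) (HR j Hj)) as [p [Hp Hc]].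
    destruct (Hc n ltac:(lia) Hw) as [c [Ec [Hc1 Hc2]]].
    pose proof (mono_le _ G P (j+1) j' ltac:(lia) ltac:(lia)).
    specialize (G j Hj). nia.
  - subst j'.
    destruct (nz_level q i w j ltac:(apply P; lia) (HR j Hj)) as [p [Hp Hc]].
    destruct (Hc n ltac:(lia) Hw) as [c [Ec [Hc1 Hc2]]].
    destruct (Hc n' ltac:(lia) Hw') as [c' [Ec' [Hc1' Hc2']]].
    assert (c < c') by nia. nia.
  - pose proof (mono_le _ G P (j'+1) j ltac:(lia) ltac:(lia)). lia.
Qed.

Lemma fst_iter p n t : 1 <= t -> fst (Nat.iter n T p) t = fst p (t + n).
Proof.
  revert t. induction n; intros t Ht.
  - simpl. rewrite Nat.add_0_r. reflexivity.
  - simpl Nat.iter. unfold T at 1. simpl fst. unfold shift1. destruct t; [lia|].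
    rewrite IHn by lia. f_equal; lia.
Qed.

Lemma spacingX q (hq : good_q q) i p k t t' : inXi q i p -> 1 <= k -> qi q i k <= t -> t < t' ->
  fst p t <> 0%Z -> fst p t' <> 0%Z -> qi q i k <= t' - t.
Proof.
  intros [_ HX] Hk Ht Htt Hn Hn'.
  destruct (HX t') as [p' [[m [p0 [HP [_ E]]]] [W _]]].
  assert (1 <= t) by (pose proof (a_ge q hq i k Hk); lia).
  rewrite (W t ltac:(lia)) in Hn. rewrite (W t' ltac:(lia)) in Hn'.
  subst p'. rewrite fst_iter in Hn, Hn' by lia.
  pose proof (spacingP q hq i (fst p0) k (t+m) (t'+m) HP Hk ltac:(lia) ltac:(lia) Hn Hn'). lia.
Qed.

Lemma T_inXi q i p : inXi q i p -> inXi q i (T p).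
Proof.
  intros [[[Hy0 Hy] Hz] HX]. split.
  - split. split. reflexivity. intros n Hn. destruct n; [lia|]. cbn. apply Hy; lia.
    intros m. cbn. apply Hz.
  - intros M. destruct (HX (S M)) as [p' [[m [p0 [HP [HZ E]]]] [W1 W2]]].
    exists (T p'). split.
    + exists (S m), p0. split; [exact HP|]. split; [exact HZ|]. subst; reflexivity.
    + split.
      * intros n Hn. destruct n; [lia|]. cbn. apply W1; lia.
      * intros m0 Hm0. cbn.
        pose proof (Hy 1 ltac:(lia)) as Ht. rewrite (W1 1 ltac:(lia)) in Ht |- *.
        apply W2. unfold trit in Ht. lia.
Qed.

Lemma iter_T_inXi q i p n : inXi q i p -> inXi q i (Nat.iter n T p).
Proof. intros H. induction n; simpl; auto. apply T_inXi; auto. Qed.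

Lemma iter_hatT n p0 p1 p2 p3 (i : nat) :
  Nat.iter n hatT (p0, p1, p2, p3, i) =
  (Nat.iter n T p0, Nat.iter n T p1, Nat.iter n T p2, Nat.iter n T p3, i).
Proof. induction n; simpl; auto. rewrite IHn. reflexivity. Qed.

Lemma snd_iter p n D : (forall d, 1 <= d <= D -> fst p (n+d) = 0%Z) ->
  forall h, h <= D -> forall m, snd (Nat.iter (n+h) T p) m = snd (Nat.iter n T p) m.
Proof.
  intros Hz h. induction h; intros Hh m.
  - rewrite Nat.add_0_r. reflexivity.
  - rewrite Nat.add_succ_r. simpl Nat.iter. unfold T at 1. simpl snd.
    rewrite fst_iter by lia. replace (1 + (n+h)) with (n + (S h)) by lia.
    rewrite Hz by lia. rewrite Z.add_0_r. apply IHh. lia.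
Qed.

Lemma win_iter p n h M D : M + h <= D -> (forall d, 1 <= d <= D -> fst p (n+d) = 0%Z) ->
  window_eq M (Nat.iter (n+h) T p) (Nat.iter n T p).
Proof.
  intros HD Hz. split.
  - intros t Ht. rewrite !fst_iter by lia.
    replace (t + (n+h)) with (n + (t+h)) by lia. replace (t+n) with (n+t) by lia.
    rewrite !Hz by lia. reflexivity.
  - intros m _. apply (snd_iter p n D Hz). lia.
Qed.

Definition cnt (f : nat -> bool) a n := length (filter f (seq a n)).

Lemma cnt_le f a n : cnt f a n <= n.
Proof.
  unfold cnt. revert a. induction n; intros a; simpl; auto.
  destruct (f a); simpl; specialize (IHn (S a)); lia.
Qed.

Lemma filter_none (f : nat -> bool) s : (forall x, In x s -> f x = false) -> length (filter f s) = 0.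
Proof.
  induction s; simpl; intros H; auto. rewrite H by auto. apply IHs; auto.
Qed.

Definition Sp (f : nat -> bool) A := forall t t', A <= t -> t < t' -> f t = true -> f t' = true -> A <= t' - t.

Lemma cnt_small f A : Sp f A -> forall W u, A <= u -> W <= A -> cnt f u W <= 1.
Proof.
  intros HS W. unfold cnt. induction W; intros u Hu HW; simpl; [lia|].
  destruct (f u) eqn:E.
  - simpl. rewrite filter_none; [lia|]. intros x Hx. apply in_seq in Hx.
    destruct (f x) eqn:E'; auto. specialize (HS u x Hu ltac:(lia) E E'). lia.
  - apply IHW; lia.
Qed.

Lemma cnt_app f a n m : cnt f a (n + m) = cnt f a n + cnt f (a + n) m.
Proof. unfold cnt. rewrite seq_app, filter_app, length_app. reflexivity. Qed.

Lemma cnt_blocks f A : 1 <= A -> Sp f A -> forall m u, A <= u -> cnt f u (m * A) <= m.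
Proof.
  intros HA HS m. induction m; intros u Hu; simpl. unfold cnt; simpl; lia.
  rewrite cnt_app. pose proof (cnt_small f A HS A u Hu (le_n _)).
  specialize (IHm (u + A) ltac:(lia)). lia.
Qed.

Lemma cnt_sub f a b n m : a <= b -> b + m <= a + n -> cnt f b m <= cnt f a n.
Proof.
  intros H1 H2. replace n with ((b - a) + (m + (a + n - b - m))) by lia.
  rewrite !cnt_app. replace (a + (b - a)) with b by lia. lia.
Qed.

Lemma cnt_bound f A : 1 <= A -> Sp f A -> forall N, cnt f 1 N <= A + N / A.
Proof.
  intros HA HS N.
  pose proof (Nat.div_mod_eq N A). pose proof (Nat.mod_upper_bound N A ltac:(lia)).
  assert (cnt f 1 N <= cnt f 1 ((A - 1) + (N / A + 1) * A)).
  { apply cnt_sub; nia. }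
  rewrite cnt_app in H1. replace (1 + (A - 1)) with A in H1 by lia.
  pose proof (cnt_blocks f A HA HS (N / A + 1) A (le_n _)).
  pose proof (cnt_le f 1 (A-1)). lia.
Qed.

Lemma filter_orb (f g : nat -> bool) s :
  length (filter (fun x => f x || g x) s) <= length (filter f s) + length (filter g s).
Proof. induction s; simpl; auto. destruct (f a), (g a); simpl; lia. Qed.

Lemma filter_exists (G : nat -> bool) s X : forall ds,
  (forall d, In d ds -> length (filter (fun n => G (n+d)) s) <= X) ->
  length (filter (fun n => existsb (fun d => G (n+d)) ds) s) <= length ds * X.
Proof.
  induction ds as [|d ds IH]; intros H.
  - simpl. rewrite filter_none; auto.
  - cbn [existsb length].
    pose proof (filter_orb (fun n => G (n+d)) (fun n => existsb (fun d => G (n+d)) ds) s).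
    assert (length (filter (fun n => G (n+d)) s) <= X) by (apply H; simpl; auto).
    assert (length (filter (fun n => existsb (fun d => G (n+d)) ds) s) <= length ds * X)
      by (apply IH; intros; apply H; simpl; auto).
    simpl. lia.
Qed.

Lemma filter_shift f d N : forall a, length (filter (fun n => f (n+d)) (seq a N)) = cnt f (a+d) N.
Proof.
  unfold cnt. induction N; intros a; simpl; auto.
  destruct (f (a+d)); simpl; rewrite IHN; reflexivity.
Qed.

Lemma compl_count (f : nat -> bool) s : (forall x, In x s -> 1 <= x) ->
  length (filter (fun n => (1 <=? n) && negb (f n)) s) + length (filter f s) = length s.
Proof.
  induction s; intros H; simpl; auto.
  assert (1 <= a) by (apply H; simpl; auto).
  assert (E : (1 <=? a) = true) by (apply Nat.leb_le; auto). destruct a as [|a]; [lia|]. simpl.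
  specialize (IHs ltac:(intros; apply H; simpl; auto)). destruct (f (S a)); simpl in *; lia.
Qed.

Definition nz (y : nat -> Z) t := negb (Z.eqb (y t) 0).
Definition G4 (y0 y1 y2 y3 : nat -> Z) t := nz y0 t || (nz y1 t || (nz y2 t || nz y3 t)).

Lemma G4_bound y0 y1 y2 y3 d N :
  length (filter (fun n => G4 y0 y1 y2 y3 (n+d)) (seq 1 N)) <=
  cnt (nz y0) (1+d) N + cnt (nz y1) (1+d) N + cnt (nz y2) (1+d) N + cnt (nz y3) (1+d) N.
Proof.
  unfold G4.
  pose proof (filter_orb (fun n => nz y0 (n+d)) (fun n => nz y1 (n+d) || (nz y2 (n+d) || nz y3 (n+d))) (seq 1 N)).
  pose proof (filter_orb (fun n => nz y1 (n+d)) (fun n => nz y2 (n+d) || nz y3 (n+d)) (seq 1 N)).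
  pose proof (filter_orb (fun n => nz y2 (n+d)) (fun n => nz y3 (n+d)) (seq 1 N)).
  rewrite !filter_shift in *. lia.
Qed.

Lemma Sp_nz q (hq : good_q q) l p k : inXi q l p -> 1 <= k -> Sp (nz (fst p)) (qi q l k).
Proof.
  intros HX Hk t t' H1 H2 E1 E2. unfold nz in *.
  apply negb_true_iff, Z.eqb_neq in E1. apply negb_true_iff, Z.eqb_neq in E2.
  eapply spacingX; eauto.
Qed.

Lemma cnt_k f A k N : 1 <= k -> k <= A -> Sp f A -> k * cnt f 1 N <= k * A + N.
Proof.
  intros Hk HkA HS. pose proof (cnt_bound f A ltac:(lia) HS N).
  pose proof (Nat.Div0.mul_div_le N A). nia.
Qed.

Lemma nat_above r : exists n : nat, (r < INR n)%R.
Proof.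
  destruct (archimed r) as [H1 _].
  destruct (Z_lt_le_dec (up r) 0) as [Hn|Hp].
  - exists 0%nat. simpl. apply IZR_lt in Hn. simpl in Hn. lra.
  - exists (Z.to_nat (up r)). rewrite INR_IZR_INZ. rewrite Z2Nat.id by lia. lra.
Qed.

Lemma lim_from_bound (B : nat -> nat) (D : nat) (Sf : nat -> nat) :
  (forall N, B N <= N) -> (forall k N, 1 <= k -> k * B N <= D * (k * Sf k + 4 * (N + D))) ->
  is_lim_seq (fun N => INR (N - B N) / INR N)%R 1%R.
Proof.
  intros HB Hk. apply is_lim_seq_spec. intros eps.
  pose proof (cond_pos eps) as Heps.
  destruct (nat_above (8 * INR D / eps)) as [k0 Hk0].
  set (k := S k0).
  set (K := (INR D * INR (Sf k) + 4 * INR D * INR D)%R).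
  destruct (nat_above (2*K/eps)) as [N0 HN0]. exists (S N0). intros N HN.
  pose proof (Hk k N ltac:(unfold k; lia)) as Hb. apply le_INR in Hb.
  rewrite !mult_INR in Hb. rewrite !plus_INR in Hb. rewrite !mult_INR in Hb. rewrite !plus_INR in Hb.
  assert (E4 : INR 4 = 4%R) by (simpl; lra). try rewrite E4 in Hb.
  rewrite minus_INR by auto.
  assert (Hkr : INR k = (INR k0 + 1)%R) by (unfold k; apply S_INR).
  assert (HNr : (INR N0 + 1 <= INR N)%R) by (rewrite <- S_INR; apply le_INR; lia).
  pose proof (pos_INR k0). pose proof (pos_INR N0). pose proof (pos_INR D).
  pose proof (pos_INR (B N)). pose proof (pos_INR (Sf k)).
  set (Nr := INR N) in *. set (Br := INR (B N)) in *. set (kr := INR k) in *.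
  set (Dr := INR D) in *. set (Sr := INR (Sf k)) in *.
  replace ((Nr - Br) / Nr - 1)%R with (- (Br / Nr))%R by (field; lra).
  rewrite Rabs_Ropp. rewrite Rabs_pos_eq.
  2: { apply Rmult_le_pos; [lra|]. left. apply Rinv_0_lt_compat. lra. }
  apply Rlt_div_l; [lra|].
  assert (A1 : (8 * Dr < kr * eps)%R).
  { assert (8 * Dr / eps * eps = 8 * Dr)%R by (field; lra). nra. }
  assert (A2 : (2 * K < Nr * eps)%R).
  { assert (2 * K / eps * eps = 2 * K)%R by (field; lra). nra. }
  assert (A3 : (kr * Br <= kr * K + 4 * Dr * Nr)%R).
  { unfold K. assert (Dr * Dr <= kr * (Dr * Dr))%R by nra. nra. }
  assert (A4 : (kr * K * 2 < kr * (Nr * eps))%R) by nra.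
  assert (A5 : (4 * Dr * Nr * 2 < kr * eps * Nr)%R) by nra.
  assert (A6 : (kr * Br < kr * (eps * Nr))%R) by nra.
  nra.
Qed.

Theorem mainTheorem12 (q : nat -> nat) (hq : good_q q) (M H : nat)
  (hM : 1 <= M) (hH : 1 <= H) (x : pt4) (hx : inX q x) :
  exists Lam : nat -> bool,
    (forall n, Lam n = true -> 1 <= n) /\
    is_lim_seq (fun N => (INR (count_upto Lam N) / INR N)%R) 1%R /\
    (forall F : pt4 -> C, CM q M F ->
       forall n, Lam n = true ->
         forall h, h <= H - 1 ->
           F (Nat.iter (n + h) hatT x) = F (Nat.iter n hatT x)).
Proof.
  destruct x as [[[[p0 p1] p2] p3] i].
  destruct hx as [X0 [X1 [X2 [X3 Hi]]]].
  remember (M + H) as D eqn:HD.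
  set (bad := fun n => existsb (fun d => G4 (fst p0) (fst p1) (fst p2) (fst p3) (n+d)) (seq 1 D)).
  exists (fun n => (1 <=? n) && negb (bad n)).
  split; [|split].
  - intros n Hn. apply andb_prop in Hn as [Hn _]. apply Nat.leb_le; auto.
  - set (B := fun N => length (filter bad (seq 1 N))).
    assert (Hc : forall N, count_upto (fun n => (1 <=? n) && negb (bad n)) N + B N = N).
    { intros N. unfold count_upto, B. rewrite compl_count. apply length_seq.
      intros y Hy. apply in_seq in Hy. lia. }
    apply is_lim_seq_ext with (u := fun N => (INR (N - B N) / INR N)%R).
    { intros N. specialize (Hc N). f_equal. f_equal. lia. }
    apply lim_from_bound with (D := D)
      (Sf := fun k => qi q 0 k + qi q 1 k + qi q 2 k + qi q 3 k).
    { intros N. specialize (Hc N). lia. }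
    intros k N Hk.
    set (C := cnt (nz (fst p0)) 1 (N+D) + cnt (nz (fst p1)) 1 (N+D)
            + cnt (nz (fst p2)) 1 (N+D) + cnt (nz (fst p3)) 1 (N+D)).
    assert (HBC : B N <= D * C).
    { assert (Hd : forall d, In d (seq 1 D) -> length (filter (fun n => G4 (fst p0) (fst p1) (fst p2) (fst p3) (n+d)) (seq 1 N)) <= C).
      { intros d Hd. apply in_seq in Hd.
        eapply Nat.le_trans; [apply G4_bound|].
        unfold C. pose proof (fun f => cnt_sub f 1 (1+d) (N+D) N ltac:(lia) ltac:(lia)) as Hs.
        pose proof (Hs (nz (fst p0))). pose proof (Hs (nz (fst p1))).
        pose proof (Hs (nz (fst p2))). pose proof (Hs (nz (fst p3))). lia. }
      pose proof (filter_exists (G4 (fst p0) (fst p1) (fst p2) (fst p3)) (seq 1 N) C (seq 1 D) Hd) as HH.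
      rewrite length_seq in HH. exact HH. }
    assert (HkC : k * C <= k * (qi q 0 k + qi q 1 k + qi q 2 k + qi q 3 k) + 4 * (N + D)).
    { unfold C.
      pose proof (cnt_k _ _ k (N+D) Hk (proj1 (a_ge q hq 0 k Hk)) (Sp_nz q hq 0 p0 k X0 Hk)).
      pose proof (cnt_k _ _ k (N+D) Hk (proj1 (a_ge q hq 1 k Hk)) (Sp_nz q hq 1 p1 k X1 Hk)).
      pose proof (cnt_k _ _ k (N+D) Hk (proj1 (a_ge q hq 2 k Hk)) (Sp_nz q hq 2 p2 k X2 Hk)).
      pose proof (cnt_k _ _ k (N+D) Hk (proj1 (a_ge q hq 3 k Hk)) (Sp_nz q hq 3 p3 k X3 Hk)).
      lia. }
    nia.
  - intros F HF n Hn h Hh.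
    assert (Z0 : forall y, (y = fst p0 \/ y = fst p1 \/ y = fst p2 \/ y = fst p3) ->
               forall d, 1 <= d <= D -> y (n+d) = 0%Z).
    { intros y Hy d Hd. apply andb_prop in Hn as [_ Hn]. apply negb_true_iff in Hn.
      destruct (Z.eqb (y (n+d)) 0) eqn:E. apply Z.eqb_eq; auto.
      exfalso. assert (bad n = true).
      { unfold bad. apply existsb_exists. exists d. split. apply in_seq; lia.
        unfold G4, nz. destruct Hy as [ -> | [ -> | [ -> | -> ]]]; rewrite E; simpl;
        rewrite ?orb_true_r; reflexivity. }
      congruence. }
    rewrite !iter_hatT.
    assert (I1 : forall m, inX q (Nat.iter m T p0, Nat.iter m T p1, Nat.iter m T p2, Nat.iter m T p3, i)).
    { intros m. unfold inX. split; [|split; [|split; [|split]]]; auto using iter_T_inXi. }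
    assert (HMh : M + h <= D) by lia.
    exact (HF _ _ (I1 (n+h)) (I1 n)
      (win_iter p0 n h M D HMh (Z0 (fst p0) ltac:(auto)))
      (win_iter p1 n h M D HMh (Z0 (fst p1) ltac:(auto)))
      (win_iter p2 n h M D HMh (Z0 (fst p2) ltac:(auto)))
      (win_iter p3 n h M D HMh (Z0 (fst p3) ltac:(auto))) eq_refl).
Qed.
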